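(* Let $M$ be a realizable point-line configuration of rank $3$ on $[d]$, and let $l$ be a line of $M$ containing exactly three points. Let $N$ be the matroid on $[d]$ whose dependent sets are exactly the subsets $S\subseteq[d]$ such that $|S|\ge4$, or $S\supseteq l$, or $S$ contains two distinct elements of $[d]\setminus l$ (so $N$ has rank $3$, no loops, $\mathcal{C}_2(N)=\{\{i,j\}: i\ne j\in[d]\setminus l\}$ and $\mathcal{C}_3(N)=\{l\}$). Then $V_N\subseteq V_M$.
   Context: A point-line configuration on $[d]$ is a simple matroid of rank at most $3$; its lines are the maximal subsets of size $\ge3$ and rank $2$. $\mathcal{C}_i(N)$ denotes the set of circuits of size $i$ of a matroid $N$. For a matroid $N$ on $[d]$ of rank at most $3$, a realization is a tuple $\gamma=(\gamma_1,\dots,\gamma_d)\in(\mathbb{C}^3)^d\cong\mathbb{C}^{3d}$ such that for all $S\subseteq[d]$, $(\gamma_s)_{s\in S}$ is linearly dependent iff $S$ is dependent in $N$; $\Gamma_N$ is the set of realizations, $N$ is realizable if $\Gamma_N\ne\emptyset$, and $V_N$ is the Zariski closure of $\Gamma_N$ in $\mathbb{C}^{3d}$. *)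

(* Defs.v *)
From mathcomp Require Import all_boot all_algebra.
From mathcomp Require Import reals complex mpoly.
Set Implicit Arguments. Unset Strict Implicit. Unset Printing Implicit Defensive.
Import GRing.Theory.
Local Open Scope ring_scope.

Section Matroid.
Variable d : nat.
Implicit Types (I : {set 'I_d} -> bool) (S T : {set 'I_d}).

Definition is_matroid I :=
  [/\ I set0,
      (forall S T, T \subset S -> I S -> I T) &
      (forall S T, I S -> I T -> (#|S| < #|T|)%N ->
         exists2 x, x \in T :\: S & I (x |: S))].

Definition mrank I S : nat :=
  \max_(T : {set 'I_d} | (T \subset S) && I T) #|T|.

Definition simple_matroid I := forall S, (#|S| <= 2)%N -> I S.

Definition pl_config_rank3 I :=
  [/\ is_matroid I, simple_matroid I & mrank I setT = 3%N].

Definition is_line I (L : {set 'I_d}) :=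
  [/\ (3 <= #|L|)%N, mrank I L = 2%N &
      forall L' : {set 'I_d}, L \subset L' -> (3 <= #|L'|)%N -> mrank I L' = 2%N -> L' = L].
End Matroid.

Section Realization.
Variables (K : fieldType) (d : nat).

Definition lin_dep (g : 'I_d -> 'rV[K]_3) (S : {set 'I_d}) : Prop :=
  exists c : 'I_d -> K,
    (exists2 s, s \in S & c s != 0) /\ \sum_(s in S) c s *: g s = 0.

Definition is_realization (dep : {set 'I_d} -> bool) (g : 'I_d -> 'rV[K]_3) :=
  forall S : {set 'I_d}, lin_dep g S <-> dep S.

Definition coords (g : 'I_d -> 'rV[K]_3) : 'I_(d * 3) -> K :=
  fun k => mxvec (\matrix_(i < d, j < 3) g i 0 j) 0 k.

(* V_dep : Zariski closure of the realization space Gamma_dep in K^(3d) *)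
Definition in_VN (dep : {set 'I_d} -> bool) (g : 'I_d -> 'rV[K]_3) : Prop :=
  forall p : {mpoly K[d * 3]},
    (forall h, is_realization dep h -> p.@[coords h] = 0) ->
    p.@[coords g] = 0.
End Realization.

Definition depN (d : nat) (l : {set 'I_d}) (S : {set 'I_d}) : bool :=
  (3 < #|S|)%N || (l \subset S) ||
  [exists i : 'I_d, exists j : 'I_d,
     [&& i != j, i \in S :\: l & j \in S :\: l]].

(* Main.v *)
Require Import Defs.
From mathcomp Require Import all_boot all_algebra.
From mathcomp Require Import reals complex mpoly.
From mathcomp Require Import ring.
Set Implicit Arguments. Unset Strict Implicit. Unset Printing Implicit Defensive.
Import GRing.Theory Num.Theory.
Local Open Scope ring_scope.


Section Lin.
Variables (K : fieldType) (d : nat).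
Implicit Types (g : 'I_d -> 'rV[K]_3).

Lemma sum_transfer g (T : 'M_3) (lam c : 'I_d -> K) (S : {set 'I_d}) :
  \sum_(s in S) c s *: (lam s *: (g s *m T)) =
  (\sum_(s in S) (c s * lam s) *: g s) *m T.
Proof.
rewrite mulmx_suml; apply: eq_bigr => s _.
by rewrite scalerA scalemxAl.
Qed.

Lemma lin_dep_transfer g g' (T : 'M_3) (lam : 'I_d -> K) :
  T \in unitmx -> (forall s, lam s != 0) ->
  (forall s, g' s = lam s *: (g s *m T)) ->
  forall S, lin_dep g' S <-> lin_dep g S.
Proof.
move=> uT nl eg S.
have eS : forall c, \sum_(s in S) c s *: g' s =
   (\sum_(s in S) (c s * lam s) *: g s) *m T.
  by move=> c; rewrite -sum_transfer; apply: eq_bigr => s _; rewrite eg.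
split=> -[c [[s0 Hs0 Hc] Hsum]].
  exists (fun s => c s * lam s); split.
    by exists s0 => //; rewrite mulf_neq0.
  by move: Hsum; rewrite eS => /(congr1 (mulmx^~ (invmx T))); rewrite mulmxK // mul0mx.
exists (fun s => c s / lam s); split.
  by exists s0 => //; rewrite mulf_neq0 // invr_eq0.
rewrite eS (eq_bigr (fun s => c s *: g s)) ?Hsum ?mul0mx // => s _.
by rewrite divfK.
Qed.

Lemma realization_transfer (dep : {set 'I_d} -> bool) g g' (T : 'M_3) (lam : 'I_d -> K) :
  T \in unitmx -> (forall s, lam s != 0) ->
  (forall s, g' s = lam s *: (g s *m T)) ->
  is_realization dep g -> is_realization dep g'.
Proof.
move=> uT nl eg Hg S; rewrite -(Hg S); exact: lin_dep_transfer uT nl eg S.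
Qed.

Lemma lin_dep1 g x : lin_dep g [set x] <-> g x = 0.
Proof.
split.
  move=> [c [[s0 Hs0 Hc] +]]; move: Hs0 Hc; rewrite inE => /eqP -> Hc; rewrite big_set1 => /eqP.
  by rewrite scaler_eq0 (negPf Hc) => /eqP.
move=> H; exists (fun _ => 1); split.
  by exists x; rewrite ?inE ?oner_neq0.
by rewrite big_set1 H scaler0.
Qed.

Lemma lin_dep2 g x y : x != y ->
  lin_dep g [set x; y] <->
  exists cx cy, (cx != 0 \/ cy != 0) /\ cx *: g x + cy *: g y = 0.
Proof.
move=> xy.
have Hs : forall c : 'I_d -> K, \sum_(s in [set x; y]) c s *: g s = c x *: g x + c y *: g y.
  by move=> c; rewrite big_setU1 ?big_set1 ?inE.  
split.
  move=> [c [[s0 Hs0 Hc] Hsum]]; exists (c x), (c y); split; last by rewrite -Hs.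
  by move: Hs0; rewrite !inE => /orP [] /eqP Hs0; [left|right]; rewrite -Hs0.
move=> [cx [cy [Hn Hsum]]].
exists (fun s => if s == x then cx else cy); split; last by rewrite Hs eqxx eq_sym (negPf xy).
case: Hn => Hn; [exists x | exists y]; rewrite ?inE ?eqxx ?orbT //.
have yx : y != x by rewrite eq_sym.
by rewrite (negPf yx).
Qed.

Lemma lin_dep3 g x y z : x != y -> x != z -> y != z ->
  lin_dep g [set x; y; z] <->
  exists cx cy cz, (cx != 0 \/ cy != 0 \/ cz != 0) /\
     cx *: g x + cy *: g y + cz *: g z = 0.
Proof.
move=> xy xz yz.
have yx : y != x by rewrite eq_sym.
have zx : z != x by rewrite eq_sym.
have zy : z != y by rewrite eq_sym.
have Hs : forall c : 'I_d -> K, \sum_(s in [set x; y; z]) c s *: g s =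
    c x *: g x + c y *: g y + c z *: g z.
  move=> c; rewrite -setUA big_setU1; last by rewrite !inE negb_or xy xz.
  rewrite big_setU1 ?big_set1; first exact: addrA. by rewrite inE.
split.
  move=> [c [[s0 Hs0 Hc] Hsum]]; exists (c x), (c y), (c z); split; last by rewrite -Hs.
  by move: Hs0; rewrite !inE => /orP [/orP []|] /eqP Hs0; [left|right;left|right;right]; rewrite -Hs0.
move=> [cx [cy [cz [Hn Hsum]]]].
exists (fun s => if s == x then cx else if s == y then cy else cz); split.
  case: Hn => [Hn|[Hn|Hn]]; [exists x | exists y | exists z]; rewrite ?inE ?eqxx ?orbT //.
    by rewrite (negPf yx).
  by rewrite (negPf zx) (negPf zy).
by rewrite Hs eqxx (negPf yx) eqxx (negPf zx) (negPf zy).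
Qed.
End Lin.

Section Mx3.
Variable K : fieldType.

Definition mx3 (u v w : 'rV[K]_3) : 'M_3 := \matrix_(i, j) [:: u; v; w]`_i 0 j.
Definition rv3 (x y z : K) : 'rV[K]_3 := \row_j [:: x; y; z]`_j.

Lemma mx3_mul x y z u v w : rv3 x y z *m mx3 u v w = x *: u + y *: v + z *: w.
Proof.
rewrite mulmx_sum_row !big_ord_recl big_ord0 addr0 addrA.
have r : forall i : 'I_3, row i (mx3 u v w) = [:: u; v; w]`_i.
  by move=> i; apply/rowP => j; rewrite !mxE.
by rewrite !r !mxE.
Qed.

Lemma row3_eq (e : 'rV[K]_3) : e = rv3 (e 0 0) (e 0 1) (e 0 2).
Proof.
apply/rowP => j; rewrite mxE.
by case: j => [[|[|[|j]]] Hj] //=; congr (e 0 _); apply: val_inj.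
Qed.

Lemma unit_mx3 u v w :
  (forall x y z, x *: u + y *: v + z *: w = 0 -> [/\ x = 0, y = 0 & z = 0]) ->
  mx3 u v w \in unitmx.
Proof.
move=> H; apply/contraT; rewrite -row_free_unit -kermx_eq0 => Hk.
have [i Hi] : exists i, row i (kermx (mx3 u v w)) != 0.
  apply/existsP; apply: contraR Hk; rewrite negb_exists => /forallP Ha.
  by apply/eqP/row_matrixP => i; rewrite row0; apply/eqP; move: (Ha i); rewrite negbK.
set e := row i _ in Hi.
have e0 : e *m mx3 u v w = 0 by rewrite /e -row_mul mulmx_ker row0.
move: e0; rewrite (row3_eq e) mx3_mul => /H [h1 h2 h3].
by move: Hi; rewrite (row3_eq e) h1 h2 h3; apply: contraNT => _; apply/eqP/rowP => j; rewrite !mxE; case: j => [[|[|[|j]]] Hj].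
Qed.

Lemma indep3 d (g : 'I_d -> 'rV[K]_3) x y z :
  x != y -> x != z -> y != z -> ~ lin_dep g [set x; y; z] ->
  forall cx cy cz, cx *: g x + cy *: g y + cz *: g z = 0 ->
    [/\ cx = 0, cy = 0 & cz = 0].
Proof.
move=> xy xz yz nd cx cy cz E.
case: (eqVneq cx 0) => [ex|nx]; last by case: nd; apply/lin_dep3 => //; exists cx, cy, cz; split => //; left.
subst cx.
case: (eqVneq cy 0) => [ey|ny]; last by case: nd; apply/lin_dep3 => //; exists 0, cy, cz; split => //; right; left.
subst cy.
case: (eqVneq cz 0) => [ez|nz] //; by case: nd; apply/lin_dep3 => //; exists 0, 0, cz; split => //; right; right.
Qed.
End Mx3.

Section Poly.
Variable K : numDomainType.

Lemma poly_lemma (n : nat) (p : {mpoly K[n]}) (A B : 'I_n -> K) :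
  (forall t : K, t != 0 -> p.@[fun k => A k + t * B k] = 0) -> p.@[A] = 0.
Proof.
move=> H.
pose q : {poly K} := \sum_(m <- msupp p) (p@_m)%:P *
   \prod_i ((A i)%:P + (B i)%:P * 'X) ^+ m i.
have hq : forall t, q.[t] = p.@[fun k => A k + t * B k].
  move=> t; rewrite mevalE /q horner_sum; apply: eq_bigr => m _.
  rewrite hornerM hornerC horner_prod; congr (_ * _); apply: eq_bigr => i _.
  by rewrite horner_exp hornerD hornerC hornerM hornerC hornerX mulrC.
have q0 : q = 0.
  case: (eqVneq q 0) => // nq; exfalso.
  have h1 : all (root q) [seq (i.+1)%:R | i <- iota 0 (size q)].
    apply/allP => x /mapP [i _ ->]; rewrite /root hq H //.
    by rewrite pnatr_eq0.
  have h2 : uniq [seq (i.+1)%:R : K | i <- iota 0 (size q)].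
    rewrite map_inj_uniq ?iota_uniq // => i j /eqP; rewrite eqr_nat.
    by move=> /eqP [].
  by have := max_poly_roots nq h1 h2; rewrite size_map size_iota ltnn.
have := hq 0; rewrite q0 horner0 => ->.
by apply: meval_eq => k; rewrite mul0r addr0.
Qed.
End Poly.



Lemma coords_lin (K : fieldType) d (v w : 'I_d -> 'rV[K]_3) (t : K) k :
  coords (fun s => v s + t *: w s) k = coords v k + t * coords w k.
Proof.
rewrite /coords.
have -> : \matrix_(i < d, j < 3) (v i + t *: w i) 0 j =
   \matrix_(i < d, j < 3) v i 0 j + t *: \matrix_(i < d, j < 3) w i 0 j.
  by apply/matrixP => i j; rewrite !mxE.
by rewrite linearD linearZ /= !mxE.
Qed.

Section Sets.
Variable d : nat.
Implicit Types (l S : {set 'I_d}).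

Lemma card_set3 (x y z : 'I_d) : (#|[set x; y; z]| <= 3)%N.
Proof.
rewrite -setUA !cardsU1 cards1.
by case: (_ \notin _); case: (_ \notin _).
Qed.

Lemma card_set2 (x y : 'I_d) : (#|[set x; y]| <= 2)%N.
Proof. by rewrite cardsU1 cards1; case: (_ \notin _). Qed.

Lemma depN_pair l x y : #|l| = 3%N -> x \in l -> y \in l ->
  ~~ depN l [set x; y].
Proof.
move=> l3 xl yl; rewrite /depN !negb_or -andbA; apply/and3P; split.
- by rewrite -leqNgt (leq_trans (card_set2 x y)).
- by apply/negP => /subset_leq_card; rewrite l3 leqNgt ltnS card_set2.
- apply/negP => /existsP [i /existsP [j /and3P [_ /setDP [Hi Hni] _]]].
  by move: Hi Hni; rewrite !inE => /orP [] /eqP ->; rewrite ?xl ?yl.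
Qed.

Lemma depN_triple l x y j : #|l| = 3%N -> x \in l -> y \in l -> j \notin l ->
  ~~ depN l [set x; y; j].
Proof.
move=> l3 xl yl jl; rewrite /depN !negb_or -andbA; apply/and3P; split.
- by rewrite -leqNgt card_set3.
- apply/negP => lS.
  have : l \subset [set x; y].
    apply/subsetP => z zl; move: (subsetP lS z zl); rewrite !inE.
    case/orP => [->//|/eqP ez]; by move: zl; rewrite ez (negPf jl).
  by move/subset_leq_card; rewrite l3 leqNgt ltnS card_set2.
- apply/negP => /existsP [i /existsP [k /and3P [ik /setDP [Hi Hni] /setDP [Hk Hnk]]]].
  move: Hi Hk Hni Hnk ik; rewrite !inE.
  case/orP => [/orP []|] /eqP ->; rewrite ?xl ?yl //.
  case/orP => [/orP []|] /eqP ->; rewrite ?xl ?yl //.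
  by rewrite eqxx.
Qed.

Lemma depN_out l j k : j \notin l -> k \notin l -> j != k -> depN l [set j; k].
Proof.
move=> jl kl jk; rewrite /depN; apply/orP; right.
apply/existsP; exists j; apply/existsP; exists k.
by rewrite jk !inE !eqxx jl kl ?orbT.
Qed.

Lemma depN_single l j : #|l| = 3%N -> ~~ depN l [set j].
Proof.
move=> l3; rewrite /depN !negb_or -andbA; apply/and3P; split.
- by rewrite cards1.
- by apply/negP => /subset_leq_card; rewrite l3 cards1.
- apply/negP => /existsP [i /existsP [k /and3P [ik /setDP [Hi _] /setDP [Hk _]]]].
  by move: Hi Hk ik; rewrite !inE => /eqP -> /eqP ->; rewrite eqxx.
Qed.

Lemma depN_l l : depN l l.
Proof. by rewrite /depN subxx orbT. Qed.

Lemma mrank_ge (I : {set 'I_d} -> bool) (S T : {set 'I_d}) : T \subset S -> I T -> (#|T| <= mrank I S)%N.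
Proof. by move=> TS IT; rewrite /mrank (bigD1 T) ?TS //= leq_maxl. Qed.

End Sets.



Lemma line_rel (K : fieldType) d (g : 'I_d -> 'rV[K]_3) a b c :
  a != b -> a != c -> b != c -> lin_dep g [set a; b; c] ->
  ~ lin_dep g [set a; b] -> ~ lin_dep g [set a; c] -> ~ lin_dep g [set b; c] ->
  exists al be, [/\ al != 0, be != 0 & g c = al *: g a + be *: g b].
Proof.
move=> ab ac bc /lin_dep3 [] // cx [cy [cz [Hn E]]] nab nac nbc.
have cz0 : cz != 0.
  apply/negP => /eqP ez; apply: nab; apply/lin_dep2 => //; exists cx, cy; split.
    by case: Hn => [h|[h|h]]; [left|right|move: h; rewrite ez eqxx].
  by move: E; rewrite ez scale0r addr0.
have cx0 : cx != 0.
  apply/negP => /eqP ex; apply: nbc; apply/lin_dep2 => //; exists cy, cz; split; first by right.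
  by move: E; rewrite ex scale0r add0r.
have cy0 : cy != 0.
  apply/negP => /eqP ey; apply: nac; apply/lin_dep2 => //; exists cx, cz; split; first by right.
  by move: E; rewrite ey scale0r addr0.
exists (- cx / cz), (- cy / cz); split; rewrite ?mulf_neq0 ?oppr_eq0 ?invr_eq0 //.
have E2 : cz *: g c = - (cx *: g a + cy *: g b).
  by apply/eqP; rewrite -addr_eq0 addrC E.
have -> : g c = cz^-1 *: (cz *: g c) by rewrite scalerA mulVf ?scale1r.
rewrite E2 scalerN scalerDr !scalerA opprD -!scaleNr.
by congr (_ *: _ + _ *: _); rewrite mulrC mulNr.
Qed.

Theorem mainTheorem9 (R : realType) (d : nat) (indM : {set 'I_d} -> bool)
    (l : {set 'I_d}) :
  pl_config_rank3 indM ->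
  (exists g : 'I_d -> 'rV[R[i]]_3, is_realization (fun S => ~~ indM S) g) ->
  is_line indM l -> #|l| = 3%N ->
  forall g : 'I_d -> 'rV[R[i]]_3,
    in_VN (depN l) g -> in_VN (fun S => ~~ indM S) g.
Proof.
move=> [[I0 Isub Iaug] Isimple Irank] [gam Hgam] [l3 lrank lmax] lcard g HgN p Hp.
apply: HgN => h Hh.
have [a al] : exists a, a \in l by apply/card_gt0P; rewrite lcard.
have : #|l :\ a| == 2%N by move: lcard; rewrite (cardsD1 a) al add1n => -[->].
case/cards2P => b [c [bc lD]].
have : b \in l :\ a by rewrite lD !inE eqxx.
rewrite !inE => /andP [ba bl].
have : c \in l :\ a by rewrite lD !inE eqxx orbT.
rewrite !inE => /andP [ca cl].
have le : l = [set a; b; c].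
  by rewrite -{1}(setD1K al) lD setUA.
have ab : a != b by apply: contraNneq ba => ->.
have ac : a != c by apply: contraNneq ca => ->.
have ind2 : forall x y, indM [set x; y] by move=> x y; apply: Isimple; apply: card_set2.
have nIl : ~~ indM l.
  by apply/negP => Il; have := mrank_ge (subxx l) Il; rewrite lrank lcard.
have [j0 j0l] : exists j0, j0 \notin l.
  apply/existsP; apply/contraT; rewrite negb_exists => /forallP H.
  have lT : l = setT by apply/setP => x; rewrite inE; move: (H x); rewrite negbK.
  by move: Irank; rewrite -lT lrank.
have indabs : forall s, s \notin l -> indM [set a; b; s].
  move=> s sl; apply/contraT => nd.
  pose L' := s |: l.
  have rk : mrank indM L' = 2%N.
    apply/eqP; rewrite eqn_leq; apply/andP; split.
      apply/bigmax_leqP => T /andP [TL IT]; rewrite leqNgt; apply/negP => T3.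
      have [x /setDP [xT xab] Ix] := Iaug _ _ (ind2 a b) IT (leq_ltn_trans (card_set2 a b) T3).
      case: (eqVneq x s) => [xs|xs].
        move: Ix; rewrite xs.
        have -> : s |: [set a; b] = [set a; b; s].
          by apply/setP => y; rewrite !inE; case: (y == a); case: (y == b); case: (y == s).
        by rewrite (negPf nd).
      case: (eqVneq x c) => [xc|xc].
        move: Ix; rewrite xc.
        have -> : c |: [set a; b] = l.
          by rewrite le; apply/setP => y; rewrite !inE; case: (y == a); case: (y == b); case: (y == c).
        by rewrite (negPf nIl).
      move: (subsetP TL x xT) xab; rewrite /L' le !inE (negPf xs) (negPf xc).
      by case: (x == a); case: (x == b).
    have := mrank_ge (T:=[set a; b]) (S:= L') _ (ind2 a b); rewrite cards2 ab; apply.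
    by apply/subsetP => y; rewrite /L' le !inE => /orP [] ->; rewrite ?orbT.
  have L3 : (2 < #|L'|)%N by rewrite -lcard subset_leq_card // subsetUr.
  have EL := lmax L' (subsetUr [set s] l) L3 rk.
  by move: sl; rewrite -EL /L' !inE eqxx.
have bc' := bc.
have aj : a != j0 by apply: contraNneq j0l => <-.
have bj : b != j0 by apply: contraNneq j0l => <-.
have nd2 : forall x y, ~ lin_dep gam [set x; y].
  by move=> x y /Hgam; rewrite ind2.
have dl : lin_dep gam [set a; b; c] by apply/Hgam; rewrite -le.
have nd3 : forall s, s \notin l -> ~ lin_dep gam [set a; b; s].
  by move=> s sl /Hgam; rewrite indabs.
have [alg [beg [alg0 beg0 gc]]] := line_rel ab ac bc dl (nd2 a b) (nd2 a c) (nd2 b c).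
have h2 : forall x y, x \in l -> y \in l -> ~ lin_dep h [set x; y].
  by move=> x y xl yl /Hh; rewrite (negPf (depN_pair lcard xl yl)).
have hl : lin_dep h [set a; b; c] by apply/Hh; rewrite -le depN_l.
have h3 : ~ lin_dep h [set a; b; j0].
  by move/Hh; rewrite (negPf (depN_triple lcard al bl j0l)).
have [alh [beh [alh0 beh0 hc]]] :=
  line_rel ab ac bc hl (h2 a b al bl) (h2 a c al cl) (h2 b c bl cl).
have hn0 : forall s, h s != 0.
  move=> s; apply/negP => /eqP e.
  have : lin_dep h [set s] by apply/lin_dep1.
  by move/Hh; rewrite (negPf (depN_single s lcard)).
have hmu : forall s, exists mu, s \notin l -> mu != 0 /\ h s = mu *: h j0.
  move=> s; case: (boolP (s \in l)) => sl; first by exists 0.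
  case: (eqVneq s j0) => [->|sj]; first by exists 1; rewrite scale1r oner_neq0.
  have : lin_dep h [set s; j0] by apply/Hh; apply: depN_out.
  case/lin_dep2 => // cs [cj [Hn E]].
  have cs0 : cs != 0.
    apply/negP => /eqP es; move: E; rewrite es scale0r add0r => /eqP.
    rewrite scaler_eq0 (negPf (hn0 j0)) orbF => /eqP cj0.
    by case: Hn => Hn; move: Hn; rewrite ?es ?cj0 eqxx.
  exists (- cj / cs) => _; split.
    apply/negP; rewrite mulf_eq0 oppr_eq0 invr_eq0 (negPf cs0) orbF => /eqP cj0.
    by move: E; rewrite cj0 scale0r addr0 => /eqP; rewrite scaler_eq0 (negPf cs0) (negPf (hn0 s)).
  have E2 : cs *: h s = - (cj *: h j0) by apply/eqP; rewrite -addr_eq0 E.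
  have -> : h s = cs^-1 *: (cs *: h s) by rewrite scalerA mulVf ?scale1r.
  by rewrite E2 scalerN -scaleNr scalerA; congr (_ *: _); field.
have [mu Hmu] := fin_all_exists hmu.
pose Bg := mx3 (gam a) (gam b) (gam j0).
have uB : Bg \in unitmx by apply: unit_mx3; apply: indep3 => //; exact: nd3 j0 j0l.
have eBg : Bg = mx3 (gam a) (gam b) (gam j0) by [].
clearbody Bg.
pose e s := gam s *m invmx Bg.
have ee : forall s, e s = gam s *m invmx Bg by [].
clearbody e.
have ge : forall s, gam s = e s 0 0 *: gam a + e s 0 1 *: gam b + e s 0 2 *: gam j0.
  by move=> s; rewrite -mx3_mul -row3_eq -eBg ee (mulmxKV uB).
have zs0 : forall s, s \notin l -> e s 0 2 != 0.
  move=> s sl; apply/negP => /eqP z0; apply: (nd3 s sl).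
  have as' : a != s by apply: contraNneq sl => <-.
  have bs : b != s by apply: contraNneq sl => <-.
  have gs := ge s; rewrite z0 scale0r addr0 in gs.
  apply/lin_dep3 => //; exists (e s 0 0), (e s 0 1), (-1); split.
    by right; right; rewrite oppr_eq0 oner_neq0.
  by rewrite scaleN1r gs subrr.
pose ua := (alh / alg) *: h a.
pose ub := (beh / beg) *: h b.
pose D t := mx3 (t *: ua) (t *: ub) (h j0).
have eD : forall t, D t = mx3 (t *: ua) (t *: ub) (h j0) by [].
clearbody D.
have uD : forall t, t != 0 -> D t \in unitmx.
  move=> t t0; rewrite eD; apply: unit_mx3 => x y z E.
  rewrite /ua /ub !scalerA in E.
  have [h1 h2' h3'] := indep3 ab aj bj h3 E.
  split => //.
    by move/eqP: h1; rewrite !mulf_eq0 invr_eq0 (negPf t0) (negPf alh0) (negPf alg0) !orbF => /eqP.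
  by move/eqP: h2'; rewrite !mulf_eq0 invr_eq0 (negPf t0) (negPf beh0) (negPf beg0) !orbF => /eqP.
have img : forall t v x y z, v = x *: gam a + y *: gam b + z *: gam j0 ->
   v *m (invmx Bg *m D t) = x *: (t *: ua) + y *: (t *: ub) + z *: h j0.
  by move=> t v x y z ->; rewrite -(mx3_mul x y z) -eBg mulmxA (mulmxK uB) eD mx3_mul.
have eua : ua = (alh / alg) *: h a by [].
have eub : ub = (beh / beg) *: h b by [].
clearbody ua ub.
pose w s := if s \in l then 0 else (mu s / e s 0 2) *: (e s 0 0 *: ua + e s 0 1 *: ub).
have ew : forall s, w s = if s \in l then 0 else (mu s / e s 0 2) *: (e s 0 0 *: ua + e s 0 1 *: ub) by [].
pose C t s := h s + t *: w s.
have eC : C = fun t s => h s + t *: w s by [].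
clearbody C w.
have hC : forall t, t != 0 -> is_realization (fun S => ~~ indM S) (C t).
  move=> t t0.
  have hlam : forall s, exists lam, lam != 0 /\ C t s = lam *: (gam s *m (invmx Bg *m D t)).
    move=> s; case: (boolP (s \in l)) => sl.
      have Cs : C t s = h s by rewrite eC ew sl scaler0 addr0.
      rewrite Cs; move: sl; rewrite le !inE => /orP [/orP [] |] /eqP ->.
      - exists (t * (alh / alg))^-1; split; first by rewrite invr_eq0 !mulf_neq0 ?invr_eq0.
        rewrite (img t (gam a) 1 0 0); last by rewrite scale1r !scale0r !addr0.
        rewrite scale1r !scale0r !addr0 eua !scalerA -{1}(scale1r (h a)); congr (_ *: _).
        by rewrite mulVf // !mulf_neq0 ?invr_eq0.
      - exists (t * (beh / beg))^-1; split; first by rewrite invr_eq0 !mulf_neq0 ?invr_eq0.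
        rewrite (img t (gam b) 0 1 0); last by rewrite scale1r !scale0r add0r addr0.
        rewrite scale1r !scale0r add0r addr0 eub !scalerA -{1}(scale1r (h b)); congr (_ *: _).
        by rewrite mulVf // !mulf_neq0 ?invr_eq0.
      - exists t^-1; split; first by rewrite invr_eq0.
        rewrite (img t (gam c) alg beg 0); last by rewrite scale0r addr0.
        rewrite scale0r addr0 hc eua eub !scalerDr !scalerA; congr (_ *: _ + _ *: _).
          by field; rewrite ?alg0 ?beg0 ?alh0 ?beh0 ?t0.
        by field; rewrite ?alg0 ?beg0 ?alh0 ?beh0 ?t0.
    have zs := zs0 s sl.
    have [mu0 hs] := Hmu s sl.
    exists (mu s / e s 0 2); split; first by rewrite mulf_neq0 ?invr_eq0.
    rewrite (img t (gam s) _ _ _ (ge s)) eC ew (negPf sl) hs eua eub !scalerDr !scalerA addrC.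
    congr (_ *: _ + _ *: _ + _ *: _).
    - by field; rewrite ?zs ?mu0 ?alg0 ?beg0 ?alh0 ?beh0 ?t0.
    - by field; rewrite ?zs ?mu0 ?alg0 ?beg0 ?alh0 ?beh0 ?t0.
    - by field; rewrite ?zs ?mu0 ?alg0 ?beg0 ?alh0 ?beh0 ?t0.
  have [lam Hlam] := fin_all_exists hlam.
  apply: (realization_transfer (g := gam) (T := invmx Bg *m D t) (lam := lam)) => //.
  - by rewrite unitmx_mul unitmx_inv uB uD.
  - by move=> s; case: (Hlam s).
  - by move=> s; case: (Hlam s).
apply: (@poly_lemma _ _ p (coords h) (coords w)) => t t0.
rewrite -(Hp (C t) (hC t t0)); apply: meval_eq => k.
by rewrite eC coords_lin.
Qed.
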